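(* Consider the single-camp, two-phase problem with bias-dependent camp weights described in the context: maximize $\sum_i v_i^{(2)}$ over nonnegative vectors $\mathbf{x^{(1)}},\mathbf{x^{(2)}}\in\mathbb{R}^n$ with $\sum_i x_i^{(1)}+\sum_i x_i^{(2)}\le k_g$. Let $k_g^{(1)}=\sum_i x_i^{(1)}$ and $k_g^{(2)}=\sum_i x_i^{(2)}$. Then it is optimal to exhaust the entire budget ($k_g^{(1)}+k_g^{(2)}=k_g$), and if not, it is optimal to not invest at all ($k_g^{(1)}=k_g^{(2)}=0$). Furthermore, it is an optimal strategy to invest on at most one node in a given phase (i.e., there is an optimal solution in which each of $\mathbf{x^{(1)}}$ and $\mathbf{x^{(2)}}$ has at most one nonzero entry).
   Context: A social network has node set $N=\{1,\dots,n\}$ and a real $n\times n$ matrix $\mathbf{w}=(w_{ij})$ with $\sum_j|w_{ij}|<1$ for every $i$; write $\Delta=(\mathbf{I}-\mathbf{w})^{-1}$. Each node $i$ has an initial opinion $v_i^0$, a bias weight $w_{ii}^0$, and a total camp weight $\theta_i$. There is a single (good) camp with budget $k_g\ge 0$ choosing investments $\mathbf{x^{(1)}},\mathbf{x^{(2)}}\ge 0$ in phases 1 and 2. Opinions evolve by $\mathbf{v^{(0)}}=\mathbf{v^0}$ and for $p=1,2$: $\mathbf{v^{(p)}}=\Delta(\mathbf{w^0}\circ\mathbf{v^{(p-1)}}+\mathbf{w_g^{(p)}}\circ\mathbf{x^{(p)}})$, where $\circ$ is the entrywise product, $\mathbf{w^0}=(w_{ii}^0)_i$, and the camp's influence weight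 on node $i$ in phase $p$ depends on the node's opinion at the start of that phase: $w_{ig}^{(p)}=\theta_i\frac{1+w_{ii}^0 v_i^{(p-1)}}{2}$. *)

(* Defs.v *)
From HB Require Import structures.
From mathcomp Require Import all_boot all_order all_algebra.
From mathcomp Require Import reals.
Set Implicit Arguments. Unset Strict Implicit. Unset Printing Implicit Defensive.
Import Order.TTheory GRing.Theory Num.Theory.
Local Open Scope ring_scope.

Section Defs.
Variables (R : realType) (n : nat).

Definition Delta (w : 'M[R]_n) : 'M[R]_n := invmx (1%:M - w).

Definition hprod (a b : 'cV[R]_n) : 'cV[R]_n := \col_i (a i 0 * b i 0).

Definition camp_weight (w0 theta vprev : 'cV[R]_n) : 'cV[R]_n :=
  \col_i (theta i 0 * ((1 + w0 i 0 * vprev i 0) / 2)).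

Definition phase (w : 'M[R]_n) (w0 theta vprev x : 'cV[R]_n) : 'cV[R]_n :=
  Delta w *m (hprod w0 vprev + hprod (camp_weight w0 theta vprev) x).

Definition v2 (w : 'M[R]_n) (w0 theta v0 x1 x2 : 'cV[R]_n) : 'cV[R]_n :=
  phase w w0 theta (phase w w0 theta v0 x1) x2.

Definition objective (w : 'M[R]_n) (w0 theta v0 x1 x2 : 'cV[R]_n) : R :=
  \sum_i v2 w w0 theta v0 x1 x2 i 0.

Definition budget (x : 'cV[R]_n) : R := \sum_i x i 0.

Definition feasible (kg : R) (x1 x2 : 'cV[R]_n) : Prop :=
  (forall i, 0 <= x1 i 0) /\ (forall i, 0 <= x2 i 0) /\
  budget x1 + budget x2 <= kg.

Definition optimal (w : 'M[R]_n) (w0 theta v0 : 'cV[R]_n) (kg : R)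
    (x1 x2 : 'cV[R]_n) : Prop :=
  feasible kg x1 x2 /\
  forall y1 y2, feasible kg y1 y2 ->
    objective w w0 theta v0 y1 y2 <= objective w w0 theta v0 x1 x2.

Definition at_most_one_node (x : 'cV[R]_n) : Prop :=
  (#|[set i : 'I_n | x i ord0 != 0%R]| <= 1)%N.

End Defs.

(* Main.v *)
Require Import Defs.
From HB Require Import structures.
From mathcomp Require Import all_boot all_order all_algebra.
From mathcomp Require Import reals ring lra.
Import Order.TTheory GRing.Theory Num.Theory.

Local Open Scope ring_scope.

Lemma quad_max (R : realType) (q : R -> R) a b c K : 0 <= K ->
  (forall t, q t = a*t*t + b*t + c) ->
  exists t, (0 <= t <= K) /\ forall s, 0 <= s <= K -> q s <= q t.
Proof.
move=> K0 hq.
have [a0|a0] := lerP 0 a.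
  have key : forall s, 0 <= s <= K -> K * q s <= (K - s) * q 0 + s * q K.
    move=> s /andP[s0 sK]; rewrite !hq.
    have h : 0 <= a * K * s * (K - s).
      by rewrite !mulr_ge0 // subr_ge0.
    have e : (K - s) * (a * 0 * 0 + b * 0 + c) + s * (a * K * K + b * K + c) - K * (a * s * s + b * s + c) = a * K * s * (K - s) by ring.
    lra.
  have [h|h] := lerP (q 0) (q K).
    exists K; split; first by rewrite K0 lexx.
    move=> s hs; have := key s hs; move: hs => /andP[s0 sK].
    have [Ke|Kp] := eqVneq K 0.
      by move=> _; have -> : s = K by lra.
    have Kp' : 0 < K by rewrite lt_def Kp K0.
    nra.
  exists 0; split; first by rewrite lexx K0.
  move=> s hs; have := key s hs; move: hs => /andP[s0 sK].
  have [Ke|Kp] := eqVneq K 0.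
    by move=> _; have -> : s = 0 by lra.
  have Kp' : 0 < K by rewrite lt_def Kp K0.
  nra.
pose ts := - b / (2 * a).
have hts : b = - 2 * a * ts by rewrite /ts; field; lra.
have [t0|t0] := lerP ts 0.
  exists 0; split; first by rewrite lexx K0.
  move=> s /andP[s0 sK]; rewrite !hq hts.
  have : 0 <= s * (- a) * (s - 2 * ts) by rewrite !mulr_ge0 //; lra.
  have e : a * 0 * 0 + - 2 * a * ts * 0 + c - (a * s * s + - 2 * a * ts * s + c) = s * (- a) * (s - 2 * ts) by ring.
  lra.
have [tK|tK] := lerP K ts.
  exists K; split; first by rewrite lexx K0.
  move=> s /andP[s0 sK]; rewrite !hq hts.
  have : 0 <= (K - s) * (- a) * (2 * ts - s - K) by rewrite !mulr_ge0 //; lra.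
  have e : a * K * K + - 2 * a * ts * K + c - (a * s * s + - 2 * a * ts * s + c) = (K - s) * (- a) * (2 * ts - s - K) by ring.
  lra.
exists ts; split; first by apply/andP; split; lra.
move=> s _; rewrite !hq hts.
have hsq := sqr_ge0 (s - ts); rewrite expr2 in hsq.
have : 0 <= (- a) * ((s - ts) * (s - ts)) by rewrite mulr_ge0 //; lra.
have e : a * ts * ts + - 2 * a * ts * ts + c - (a * s * s + - 2 * a * ts * s + c) = (- a) * ((s - ts) * (s - ts)) by ring.
lra.
Qed.

Lemma exmax (R : realType) (T : finType) (g : T -> R) (x0 : T) : exists j, forall k, g k <= g j.
Proof. case: (@arg_maxP _ _ T x0 xpredT g isT) => j _ H; exists j => k; exact: H. Qed.

Section S.
Variables (R : realType) (n : nat) (w : 'M[R]_n) (v0 w0 theta : 'cV[R]_n).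

Definition ev (t : R) (i : 'I_n) : 'cV[R]_n := \col_k (if k == i then t else 0).

Lemma sum_evF (F : 'I_n -> R -> R) t i : (forall k, F k 0 = 0) ->
  \sum_k F k (ev t i k 0) = F i t.
Proof.
move=> F0; rewrite (bigD1 i) //= big1 ?addr0 ?mxE ?eqxx // => k /negbTE hk.
by rewrite mxE hk F0.
Qed.

Lemma budget_ev t i : budget (ev t i) = t.
Proof. by rewrite /budget (sum_evF (fun k y => y)). Qed.

Lemma ev0 i : ev 0 i = 0.
Proof. by apply/matrixP => k l; rewrite !mxE; case: ifP. Qed.

Lemma amo_ev t i : at_most_one_node (ev t i).
Proof.
rewrite /at_most_one_node.
apply: (leq_trans (subset_leq_card (_ : _ \subset [set i]))); last by rewrite cards1.
apply/subsetP => k; rewrite !inE mxE; case: ifP => //; by rewrite eqxx.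
Qed.

Let D := Delta w.
Let F x1 x2 := objective w w0 theta v0 x1 x2.
Let u k := \sum_i D i k.

Lemma P1 v x k : phase w w0 theta v x k 0 =
  \sum_l D k l * (w0 l 0 * v l 0) + \sum_l (D k l * camp_weight w0 theta v l 0) * x l 0.
Proof.
rewrite /phase mxE -big_split /=; apply: eq_bigr => l _; rewrite !mxE /=; ring.
Qed.

Lemma Fform x1 x2 : F x1 x2 = \sum_k u k * (w0 k 0 * phase w w0 theta v0 x1 k 0 +
   theta k 0 * ((1 + w0 k 0 * phase w w0 theta v0 x1 k 0) / 2) * x2 k 0).
Proof.
rewrite /F /objective /v2; set V := phase w w0 theta v0 x1.
under eq_bigr => i _ do rewrite /phase mxE.
rewrite exchange_big; apply: eq_bigr => k _; rewrite /u mulr_suml; apply: eq_bigr => i _.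
by rewrite !mxE.
Qed.


Lemma Aff2 x1 : exists a (g : 'I_n -> R), forall x2, F x1 x2 = a + \sum_k g k * x2 k 0.
Proof.
set V := phase w w0 theta v0 x1.
exists (\sum_k u k * (w0 k 0 * V k 0)), (fun k => u k * (theta k 0 * ((1 + w0 k 0 * V k 0) / 2))).
move=> x2; rewrite Fform; under eq_bigr => k _ do rewrite mulrDr.
rewrite big_split /=; congr (_ + _); apply: eq_bigr => k _; rewrite -/V; ring.
Qed.

Lemma Aff1 x2 : exists a (g : 'I_n -> R), forall x1, F x1 x2 = a + \sum_k g k * x1 k 0.
Proof.
pose e k := u k * (w0 k 0 + theta k 0 * w0 k 0 * x2 k 0 / 2).
pose r k := u k * theta k 0 * x2 k 0 / 2.
pose p k := \sum_l D k l * (w0 l 0 * v0 l 0).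
pose m k l := D k l * camp_weight w0 theta v0 l 0.
exists (\sum_k (r k + e k * p k)), (fun l => \sum_k e k * m k l) => x1.
rewrite Fform.
transitivity (\sum_k (r k + e k * phase w w0 theta v0 x1 k 0)).
  by apply: eq_bigr => k _; rewrite /r /e; ring.
transitivity (\sum_k ((r k + e k * p k) + \sum_l e k * m k l * x1 l 0)).
  apply: eq_bigr => k _; rewrite P1 mulrDr addrA; congr (_ + _); rewrite mulr_sumr.
  by apply: eq_bigr => l _; rewrite /m mulrA.
rewrite big_split /=; congr (_ + _); rewrite exchange_big /=.
by apply: eq_bigr => l _; rewrite mulr_suml.
Qed.

Lemma Hquad kg i j : exists a b c, forall t,
  F (ev t i) (ev (kg - t) j) = a * t * t + b * t + c.
Proof.
pose p k := \sum_l D k l * (w0 l 0 * v0 l 0).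
pose m k := D k i * camp_weight w0 theta v0 i 0.
have hV : forall t k, phase w w0 theta v0 (ev t i) k 0 = p k + m k * t.
  move=> t k; rewrite P1 (sum_evF (fun l y => D k l * camp_weight w0 theta v0 l 0 * y)) //.
  by move=> l; rewrite mulr0.
pose A := \sum_k u k * (w0 k 0 * p k).
pose B := \sum_k u k * (w0 k 0 * m k).
pose C := u j * theta j 0.
exists (- (C * w0 j 0 * m j) / 2), (B + C * (w0 j 0 * m j * kg - (1 + w0 j 0 * p j)) / 2),
  (A + C * (1 + w0 j 0 * p j) * kg / 2) => t.
rewrite Fform.
under eq_bigr => k _ do rewrite hV mulrDr.
rewrite big_split /=.
rewrite (sum_evF (fun k y => u k * (theta k 0 * ((1 + w0 k 0 * (p k + m k * t)) / 2) * y))); last first.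
  by move=> k; rewrite !mulr0.
have -> : \sum_k u k * (w0 k 0 * (p k + m k * t)) = A + B * t.
  rewrite /A /B mulr_suml -big_split /=; apply: eq_bigr => k _; ring.
rewrite /C; ring.
Qed.


Lemma aff_bound (f : 'cV[R]_n -> R) a (g : 'I_n -> R) (i0 : 'I_n) (x : 'cV[R]_n) :
  (forall x, f x = a + \sum_k g k * x k 0) -> (forall k, 0 <= x k 0) ->
  exists j, f x <= f (ev (budget x) j).
Proof.
move=> hf x0.
have [j hj] := @exmax R _ g i0.
exists j; rewrite !hf (sum_evF (fun k y => g k * y)) ?lerD2l; last by move=> k; rewrite mulr0.
rewrite /budget mulr_sumr; apply: ler_sum => k _.
exact: ler_wpM2r.
Qed.

Lemma aff_1d (f : 'cV[R]_n -> R) a (g : 'I_n -> R) j s K :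
  (forall x, f x = a + \sum_k g k * x k 0) -> 0 <= s <= K ->
  f (ev s j) <= f (ev 0 j) \/ f (ev s j) <= f (ev K j).
Proof.
move=> hf /andP[s0 sK]; rewrite !hf !(sum_evF (fun k y => g k * y)); try by move=> k; rewrite mulr0.
have [g0|g0] := lerP 0 (g j).
  by right; rewrite lerD2l ler_wpM2l.
left; rewrite lerD2l mulr0; nra.
Qed.

Variable kg : R.
Hypothesis hkg : 0 <= kg.

Lemma key (i0 : 'I_n) y1 y2 : feasible kg y1 y2 ->
  F y1 y2 <= F 0 0 \/ exists i j t, 0 <= t <= kg /\ F y1 y2 <= F (ev t i) (ev (kg - t) j).
Proof.
case=> h1 [h2 hb].
have b10 : 0 <= budget y1 by apply: sumr_ge0.
have b20 : 0 <= budget y2 by apply: sumr_ge0.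
have [a2 [g2 hf2]] := Aff2 y1.
have [j hj] := aff_bound _ _ _ i0 _ hf2 h2.
have hs : 0 <= budget y2 <= kg - budget y1 by apply/andP; split; lra.
case: (aff_1d _ _ _ j _ _ hf2 hs) => hj2.
  have [a1 [g1 hf1]] := Aff1 (ev 0 j).
  have [i hi] := aff_bound _ _ _ i0 _ hf1 h1.
  have hs1 : 0 <= budget y1 <= kg by apply/andP; split; lra.
  case: (aff_1d _ _ _ i _ _ hf1 hs1) => hi2.
    by left; move: hj hj2 hi hi2; rewrite /= !ev0 => *; lra.
  right; exists i, j, kg; split; first by rewrite lexx hkg.
  rewrite subrr; lra.
have [a1 [g1 hf1]] := Aff1 (ev (kg - budget y1) j).
have [i hi] := aff_bound _ _ _ i0 _ hf1 h1.
right; exists i, j, (budget y1); split; first by apply/andP; split; lra.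
lra.
Qed.

Lemma main (i0 : 'I_n) : exists x1 x2, optimal w w0 theta v0 kg x1 x2 /\
  (budget x1 + budget x2 = kg \/ (budget x1 = 0 /\ budget x2 = 0)) /\
  at_most_one_node x1 /\ at_most_one_node x2.
Proof.
pose H (p : 'I_n * 'I_n) t := F (ev t p.1) (ev (kg - t) p.2).
have hq : forall p, exists t, (0 <= t <= kg) /\ forall s, 0 <= s <= kg -> H p s <= H p t.
  move=> [i j]; have [a [b [c hc]]] := Hquad kg i j.
  exact: (@quad_max R _ _ _ _ _ hkg hc).
have [tf htf] := fin_all_exists hq.
have [ps hps] := @exmax R _ (fun p => H p (tf p)) (i0, i0).
have bound : forall y1 y2, feasible kg y1 y2 -> F y1 y2 <= Num.max (F 0 0) (H ps (tf ps)).
  move=> y1 y2 hf; case: (key i0 _ _ hf) => [h|[i [j [t [ht h]]]]].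
    by rewrite le_max h.
  rewrite le_max; apply/orP; right.
  apply: (le_trans h); apply: (le_trans _ (hps (i, j))).
  by have [_ ] := htf (i, j); apply.
have [_ hle] := htf ps.
have [ht0 _] := htf ps.
have [hm|hm] := lerP (H ps (tf ps)) (F 0 0).
  exists 0, 0; split; last first.
    rewrite -(ev0 i0) budget_ev; split; first by right.
    by split; apply: amo_ev.
  split.
    split; first by move=> i; rewrite mxE.
    split; first by move=> i; rewrite mxE.
    by rewrite /budget big1 ?addr0 // => i _; rewrite mxE.
  move=> y1 y2 hf; have := bound _ _ hf.
  have -> : Num.max (F 0 0) (H ps (tf ps)) = F 0 0 by apply/max_idPl.
  by [].
exists (ev (tf ps) ps.1), (ev (kg - tf ps) ps.2); split; last first.
  rewrite !budget_ev; split; first by left; lra.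
  by split; apply: amo_ev.
split.
  move: ht0 => /andP[t0 tk].
  split; first by move=> i; rewrite mxE; case: ifP.
  split; first by move=> i; rewrite mxE; case: ifP => // _; lra.
  by rewrite !budget_ev; lra.
move=> y1 y2 hf; have := bound _ _ hf.
have -> : Num.max (F 0 0) (H ps (tf ps)) = H ps (tf ps).
  by apply/max_idPr; apply: ltW.
by [].
Qed.

End S.

Theorem lemma1 (R : realType) (n : nat) (w : 'M[R]_n)
  (hw : forall i : 'I_n, \sum_(j < n) `|w i j| < 1)
  (v0 w0 theta : 'cV[R]_n) (kg : R) (hkg : 0 <= kg) :
  (exists x1 x2 : 'cV[R]_n,
     optimal w w0 theta v0 kg x1 x2 /\
     (budget x1 + budget x2 = kg \/ (budget x1 = 0 /\ budget x2 = 0))) /\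
  (exists x1 x2 : 'cV[R]_n,
     optimal w w0 theta v0 kg x1 x2 /\
     at_most_one_node x1 /\ at_most_one_node x2).
Proof.
case: n w hw v0 w0 theta => [|n'] w' _ v0' w0' th'.
  have amo0 : forall x : 'cV[R]_0, at_most_one_node x.
    by move=> x; rewrite /at_most_one_node (leq_trans (max_card _)) // card_ord.
  have bud0 : forall x : 'cV[R]_0, budget x = 0 by move=> x; rewrite /budget big_ord0.
  have o : optimal w' w0' th' v0' kg 0 0.
    split.
      split; first by move=> [].
      split; first by move=> [].
      by rewrite !bud0 addr0.
    by move=> y1 y2 _; rewrite /objective !big_ord0.
  split; exists 0, 0; split => //; first by right; rewrite !bud0.
have [x1 [x2 [ho [hb [a1 a2]]]]] := @main R n'.+1 w' v0' w0' th' kg hkg ord0.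
by split; exists x1, x2.
Qed.
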